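(* Let $\Theta\subseteq\mathbb{R}^p$ be open and $\theta\mapsto|\psi_\theta\rangle$ a differentiable family of unit vectors in $\mathbb{C}^d$, with $\rho_\theta=|\psi_\theta\rangle\langle\psi_\theta|$, and let $\theta_0\in\Theta$. Then equality in the quantum Cramér–Rao inequality is attainable at $\theta_0$ (equivalently, Matsumoto's condition $\mathrm{Im}\langle l_j(\theta_0)|l_k(\theta_0)\rangle=0$ for all $j,k$ holds) if and only if $\mathrm{Im}\langle\psi^{(j)}_{\theta_0}|\psi^{(k)}_{\theta_0}\rangle=0$ for all $j,k$, where $|\psi^{(j)}_\theta\rangle=\partial|\psi_\theta\rangle/\partial\theta^j$.
   Context: For $j=1,\dots,p$ let $\lambda^j_\theta$ be a Hermitian solution of $\frac{\partial\rho_\theta}{\partial\theta^j}=\frac12(\rho_\theta\lambda^j_\theta+\lambda^j_\theta\rho_\theta)$ (symmetric logarithmic derivative), and $|l_j(\theta)\rangle=\lambda^j_\theta|\psi_\theta\rangle$ (independent of the choice of $\lambda^j_\theta$). The SLD quantum information is the matrix $(H_\theta)_{jk}=\mathrm{Re}\,\mathrm{tr}\{\lambda^j_\theta\rho_\theta\lambda^k_\theta\}$. The quantum Cramér–Rao inequality states that for a POVM with unbiased estimator $\hat\theta$, $E[(\hat\theta-\theta)(\hat\theta-\theta)^T]\ge H_\theta^{-1}$; by a theorem of Matsumoto, for pure-state families there exist a POVM and estimator achieving equality at $\theta_0$ if and only if $\mathrm{Im}\langle l_j(\theta_0)|l_k(\theta_0)\rangle=0$ for all $j,k$. *)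

(* Defs.v *)
From HB Require Import structures.
From mathcomp Require Import all_boot all_order all_algebra.
From mathcomp Require Import all_classical all_reals all_analysis.
From mathcomp Require Import complex.
Set Implicit Arguments. Unset Strict Implicit. Unset Printing Implicit Defensive.
Import Order.TTheory GRing.Theory Num.Theory.
Import numFieldNormedType.Exports.
Local Open Scope ring_scope.

Definition dagger (R : rcfType) m n (A : 'M[R[i]]_(m, n)) : 'M[R[i]]_(n, m) :=
  map_mx (@conjc R) A^T.

Definition braket (R : rcfType) d (u v : 'cV[R[i]]_d) : R[i] :=
  (dagger u *m v) 0 0.

Definition hermitian_mx (R : rcfType) d (A : 'M[R[i]]_d) : Prop := dagger A = A.

Definition ketbra (R : rcfType) d (u : 'cV[R[i]]_d) : 'M[R[i]]_d :=
  u *m dagger u.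

Definition cmx_differentiable (R : realType) p m n
    (F : 'rV[R]_p -> 'M[R[i]]_(m, n)) (x : 'rV[R]_p) : Prop :=
  forall a b, differentiable (fun y => complex.Re (F y a b)) x /\
              differentiable (fun y => complex.Im (F y a b)) x.

Definition cmx_partial (R : realType) p m n
    (F : 'rV[R]_p -> 'M[R[i]]_(m, n)) (j : 'I_p) (x : 'rV[R]_p)
    : 'M[R[i]]_(m, n) :=
  \matrix_(a, b) Complex ('D_(delta_mx 0 j) (fun y => complex.Re (F y a b)) x)
                         ('D_(delta_mx 0 j) (fun y => complex.Im (F y a b)) x).

(* Main.v *)
Require Import Defs.
From HB Require Import structures.
From mathcomp Require Import all_boot all_order all_algebra.
From mathcomp Require Import all_classical all_reals all_analysis.
From mathcomp Require Import complex.
From mathcomp Require Import ring lra.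
Import Order.TTheory GRing.Theory Num.Theory.
Import numFieldNormedType.Exports.
Local Open Scope ring_scope.


Lemma cext (R : rcfType) (x y : R[i]) : complex.Re x = complex.Re y -> complex.Im x = complex.Im y -> x = y.
Proof. case: x => a b; case: y => c e. simpl. move=> h1 h2. subst. reflexivity. Qed.
Lemma cReD (R : rcfType) (x y : R[i]) : complex.Re (x + y) = complex.Re x + complex.Re y.
Proof. by case: x => a b; case: y. Qed.
Lemma cImD (R : rcfType) (x y : R[i]) : complex.Im (x + y) = complex.Im x + complex.Im y.
Proof. by case: x => a b; case: y. Qed.
Lemma cReM (R : rcfType) (x y : R[i]) : complex.Re (x * y) = complex.Re x * complex.Re y - complex.Im x * complex.Im y.
Proof. by case: x => a b; case: y. Qed.
Lemma cImM (R : rcfType) (x y : R[i]) : complex.Im (x * y) = complex.Re x * complex.Im y + complex.Im x * complex.Re y.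
Proof. by case: x => a b; case: y. Qed.
Lemma cReJ (R : rcfType) (x : R[i]) : complex.Re (x^*)%C = complex.Re x.
Proof. by case: x. Qed.
Lemma cImJ (R : rcfType) (x : R[i]) : complex.Im (x^*)%C = - complex.Im x.
Proof. by case: x. Qed.

Lemma braketE (R : rcfType) d (u v : 'cV[R[i]]_d) :
  braket u v = \sum_a (u a 0)^*%C * v a 0.
Proof. by rewrite /braket !mxE; apply: eq_bigr => a _; rewrite !mxE. Qed.

Lemma braketr (R : rcfType) d (u v w : 'cV[R[i]]_d) (c : R[i]) :
  braket u (c *: v + w) = c * braket u v + braket u w.
Proof.
rewrite !braketE mulr_sumr -big_split; apply: eq_bigr => a _.
by rewrite !mxE mulrDr mulrCA.
Qed.

Lemma braketl (R : rcfType) d (u v w : 'cV[R[i]]_d) (c : R[i]) :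
  braket (c *: v + w) u = (c^*)%C * braket v u + braket w u.
Proof.
rewrite !braketE mulr_sumr -big_split; apply: eq_bigr => a _.
by rewrite !mxE rmorphD rmorphM /= mulrDl mulrA.
Qed.

Lemma braketC (R : rcfType) d (u v : 'cV[R[i]]_d) :
  braket v u = (braket u v)^*%C.
Proof.
rewrite !braketE rmorph_sum; apply: eq_bigr => a _.
by rewrite rmorphM /= conjcK mulrC.
Qed.

Lemma mx11_mul (R : rcfType) d (X v w : 'cV[R[i]]_d) :
  X *m (dagger v *m w) = braket v w *: X.
Proof. by rewrite {1}[dagger v *m w]mx11_scalar mul_mx_scalar. Qed.

Lemma braketZr (R : rcfType) d (u v : 'cV[R[i]]_d) (c : R[i]) :
  braket u (c *: v) = c * braket u v.
Proof.
rewrite !braketE mulr_sumr; apply: eq_bigr => a _.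
by rewrite !mxE mulrCA.
Qed.
Lemma braketDr (R : rcfType) d (u v w : 'cV[R[i]]_d) :
  braket u (v + w) = braket u v + braket u w.
Proof. by rewrite -{1}[v]scale1r braketr mul1r. Qed.
Lemma braketZl (R : rcfType) d (u v : 'cV[R[i]]_d) (c : R[i]) :
  braket (c *: v) u = (c^*)%C * braket v u.
Proof. by rewrite braketC braketZr rmorphM /= -braketC. Qed.
Lemma braketDl (R : rcfType) d (u v w : 'cV[R[i]]_d) :
  braket (v + w) u = braket v u + braket w u.
Proof. by rewrite braketC braketDr rmorphD /= -!braketC. Qed.

Lemma Renat (R : rcfType) n : complex.Re (n%:R : R[i]) = n%:R.
Proof. elim: n => [//|n IH]; by rewrite !mulrS cReD IH. Qed.
Lemma Imnat (R : rcfType) n : complex.Im (n%:R : R[i]) = 0.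
Proof. elim: n => [//|n IH]; by rewrite !mulrS cImD IH addr0. Qed.

Lemma key (R : rcfType) d (u v : 'cV[R[i]]_d) (L : 'M[R[i]]_d) :
  braket u u = 1 -> complex.Re (braket u v) = 0 ->
  v *m dagger u + u *m dagger v =
     (1 / 2 : R[i]) *: (ketbra u *m L + L *m ketbra u) ->
  L *m u = 2%:R *: (v + (braket u v)^*%C *: u).
Proof.
move=> nu re E.
have E2 := congr1 (fun M => M *m u) E; move: E2 => /=.
rewrite /ketbra mulmxDl -!scalemxAl mulmxDl -!mulmxA !mx11_mul nu !scale1r.
rewrite [braket v u]braketC => E2.
have E3 := congr1 (braket u) E2; move: E3.
rewrite !braketZr !braketDr !braketZr nu !mulr1.
set c := braket u v; set m := braket u (L *m u) => E3.
have cc : c + (c^*)%C = 0.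
  by apply: cext; [rewrite cReD cReJ re addr0 | rewrite cImD cImJ subrr].
have h2 : (2%:R : R[i]) != 0 by rewrite pnatr_eq0.
have m0 : m = 0.
  move: E3; rewrite cc => /esym /eqP; rewrite mulf_eq0 => /orP[|].
    by rewrite div1r invr_eq0 (negPf h2).
  by rewrite -mulr2n mulrn_eq0 /= => /eqP.
move: E2; rewrite -/m m0 scale0r add0r => ->.
by rewrite scalerA div1r mulrV ?unitfE // scale1r.
Qed.

Lemma natC (R : rcfType) n : (n%:R : R[i]) = Complex n%:R 0.
Proof. by apply: cext; rewrite ?Renat ?Imnat. Qed.

Lemma imlem (R : rcfType) d (u vj vk : 'cV[R[i]]_d) :
  braket u u = 1 -> complex.Re (braket u vj) = 0 -> complex.Re (braket u vk) = 0 ->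
  complex.Im (braket (2%:R *: (vj + (braket u vj)^*%C *: u))
                     (2%:R *: (vk + (braket u vk)^*%C *: u)))
  = 4%:R * complex.Im (braket vj vk).
Proof.
move=> nu rj rk.
rewrite braketZl braketZr !braketDl !braketDr !braketZl !braketZr nu.
rewrite [braket vj u]braketC.
move: rj rk; set cj := braket u vj; set ck := braket u vk; set X := braket vj vk.
case: cj => a b /= ->; case: ck => a' b' /= ->; case: X => x y.
rewrite !natC. simpc. rewrite /=. ring.
Qed.

Lemma cmul_lemma (R : rcfType) (A B C D : R) (z w : R[i]) :
 Complex (complex.Re z *: C + complex.Re w *: A + (complex.Im z *: D + complex.Im w *: B))
         (complex.Im z *: C + complex.Re w *: B - (complex.Re z *: D + complex.Im w *: A))
 = Complex A B * (w^*)%C + z * ((Complex C D)^*)%C.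
Proof.
have sE : forall x y : R, x *: y = x * y by [].
case: z => a b; case: w => c e; apply: cext;
  rewrite ?cReD ?cImD ?cReM ?cImM ?cReJ ?cImJ /= !sE; ring.
Qed.


Lemma partial_ketbra (R : realType) p d (psi : 'rV[R]_p -> 'cV[R[i]]_d) j x :
  cmx_differentiable psi x ->
  cmx_partial (fun t => ketbra (psi t)) j x =
  cmx_partial psi j x *m dagger (psi x) + psi x *m dagger (cmx_partial psi j x).
Proof.
move=> dpsi; apply/matrixP => a b; rewrite !mxE !big_ord1 !mxE.
set fa := fun y => complex.Re (psi y a ord0); set ga := fun y => complex.Im (psi y a ord0).
set fb := fun y => complex.Re (psi y b ord0); set gb := fun y => complex.Im (psi y b ord0).
set v := delta_mx 0 j.
have dfa : derivable fa x v by apply: diff_derivable; case: (dpsi a 0).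
have dga : derivable ga x v by apply: diff_derivable; case: (dpsi a 0).
have dfb : derivable fb x v by apply: diff_derivable; case: (dpsi b 0).
have dgb : derivable gb x v by apply: diff_derivable; case: (dpsi b 0).
rewrite (_ : (fun y => complex.Re (ketbra (psi y) a b)) = fa * fb + ga * gb); last first.
  apply: funext => y; rewrite /ketbra /dagger !mxE big_ord1 !mxE. rewrite cReM cReJ cImJ.
  by rewrite mulrN opprK.
rewrite (_ : (fun y => complex.Im (ketbra (psi y) a b)) = ga * fb - fa * gb); last first.
  apply: funext => y; rewrite /ketbra /dagger !mxE big_ord1 !mxE cImM cReJ cImJ.
  by rewrite mulrN addrC.
have d1 := derivableM dga dfb.
have d2 := derivableM dfa dgb.
have d3 := derivableM dfa dfb.
have d4 := derivableM dga dgb.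
have e1 := deriveB d1 d2.
have e2 := deriveD d3 d4.
rewrite e1 e2.
rewrite (deriveM dga dfb) (deriveM dfa dgb) (deriveM dfa dfb) (deriveM dga dgb).
rewrite -(@cmul_lemma R ('D_v fa x) ('D_v ga x) ('D_v fb x) ('D_v gb x) (psi x a ord0) (psi x b ord0)).
reflexivity.
Qed.

Lemma cRe_sum (R : rcfType) d (F : 'I_d -> R[i]) :
  complex.Re (\sum_(a < d) F a) = \sum_(a < d) complex.Re (F a).
Proof. by apply: (big_morph _ (@cReD R)). Qed.

Lemma aux_norm (R : rcfType) (A B : R) (z : R[i]) :
  complex.Re z *: A + complex.Re z *: A + (complex.Im z *: B + complex.Im z *: B)
  = 2%:R * complex.Re (z^*%C * Complex A B).
Proof.
have sE : forall x y : R, x *: y = x * y by [].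
by case: z => a b; rewrite cReM cReJ cImJ /= !sE; ring.
Qed.

Lemma norm_deriv (R : realType) p d (Theta : set 'rV[R]_p)
    (psi : 'rV[R]_p -> 'cV[R[i]]_d) x j :
  open Theta -> Theta x -> cmx_differentiable psi x ->
  (forall t, Theta t -> braket (psi t) (psi t) = 1) ->
  complex.Re (braket (psi x) (cmx_partial psi j x)) = 0.
Proof.
move=> oT Tx dpsi nrm.
pose v : 'rV[R]_p := delta_mx 0 j.
pose f a := fun y => complex.Re (psi y a ord0).
pose g a := fun y => complex.Im (psi y a ord0).
have df a : derivable (f a) x v by apply: diff_derivable; case: (dpsi a 0).
have dg a : derivable (g a) x v by apply: diff_derivable; case: (dpsi a 0).
pose h a := f a * f a + g a * g a.
have dh a : derivable (h a) x v := derivableD (derivableM (df a) (df a)) (derivableM (dg a) (dg a)).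
have nT : \forall y \near x, Theta y by exact: oT.
have e1 : 'D_v (\sum_(a < d) h a) x = 'D_v (cst (1 : R)) x.
  apply: near_eq_derive; apply: filterS nT => y Ty.
  rewrite fct_sumE /cst; transitivity (complex.Re (braket (psi y) (psi y))); last by rewrite nrm.
  rewrite braketE cRe_sum; apply: eq_bigr => a _.
  by rewrite cReM cReJ cImJ mulNr opprK.
move: e1; rewrite derive_cst (derive_sum dh).
have e2 a : 'D_v (h a) x =
    2%:R * complex.Re ((psi x a ord0)^*%C * cmx_partial psi j x a ord0).
  rewrite (deriveD (derivableM (df a) (df a)) (derivableM (dg a) (dg a))).
  rewrite (deriveM (df a) (df a)) (deriveM (dg a) (dg a)) mxE.
  exact: (@aux_norm R).
move=> e1.
have e3 : \sum_(a < d) 'D_v (h a) x =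
   2%:R * \sum_(a < d) complex.Re ((psi x a ord0)^*%C * cmx_partial psi j x a ord0).
  by rewrite mulr_sumr; apply: eq_bigr => a _; exact: e2.
move: e3; rewrite e1 => /esym/eqP.
rewrite mulf_eq0 pnatr_eq0 /= braketE cRe_sum => /eqP S0.
apply: etrans S0; apply: eq_bigr => a _; by [].
Qed.

Theorem lemma4p1 (R : realType) (p d : nat) (Theta : set 'rV[R]_p)
    (psi : 'rV[R]_p -> 'cV[R[i]]_d) (theta0 : 'rV[R]_p) :
  open Theta -> Theta theta0 ->
  (forall theta, Theta theta -> cmx_differentiable psi theta) ->
  (forall theta, Theta theta -> braket (psi theta) (psi theta) = 1) ->
  forall lam : 'I_p -> 'M[R[i]]_d,
  (forall j, hermitian_mx (lam j)) ->
  (forall j, cmx_partial (fun theta => ketbra (psi theta)) j theta0 =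
     (1 / 2 : R[i]) *: (ketbra (psi theta0) *m lam j + lam j *m ketbra (psi theta0))) ->
  ((forall j k, complex.Im (braket (lam j *m psi theta0) (lam k *m psi theta0)) = 0)
   <->
   (forall j k, complex.Im (braket (cmx_partial psi j theta0)
                           (cmx_partial psi k theta0)) = 0)).
Proof.
move=> oT T0 dif nrm lam _ Hd.
have nu : braket (psi theta0) (psi theta0) = 1 := nrm _ T0.
have re j : complex.Re (braket (psi theta0) (cmx_partial psi j theta0)) = 0.
  exact: (@norm_deriv R p d Theta psi theta0 j oT T0 (dif _ T0) nrm).
have Lu j : lam j *m psi theta0 = 2%:R *: (cmx_partial psi j theta0 +
   (braket (psi theta0) (cmx_partial psi j theta0))^*%C *: psi theta0).
  apply: (@key _ _ _ _ _ nu (re j)).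
  by rewrite -(@partial_ketbra R p d psi j theta0 (dif _ T0)) Hd.
have E j k : complex.Im (braket (lam j *m psi theta0) (lam k *m psi theta0)) =
   4%:R * complex.Im (braket (cmx_partial psi j theta0) (cmx_partial psi k theta0)).
  by rewrite Lu Lu; apply: imlem.
have n4 : (4%:R : R) != 0 by rewrite pnatr_eq0.
split=> H j k.
  by have := H j k; rewrite E => /eqP; rewrite mulf_eq0 (negPf n4) /= => /eqP.
by rewrite E H mulr0.
Qed.
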